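(* Let $(m,q,d,\tau)$ be suitable parameters and let $\rho=f,X_1,\dots,X_m$ where $f:\Omega\to\mathbb F_q^{d+1}$ is a bijection, $X_1,\dots,X_m$ form a partition of $\mathbb F_q^d$ and $|X_k|=\tau_{B_k}$ for all $k$. Then for every transversal hyperplane $V$ of $\mathbb F_q^{d+1}$, $N(V,\rho)$ is a deal of distribution type $\tau$ and $(N(V,\rho),\rho)$ is an execution of the shifted projection protocol.
   Context: Agents $\mathcal A=\{A,B_1,\dots,B_m\}$ speak in order $A,B_1,\dots,B_m$. A distribution type is a vector $\tau=(\tau_P)_{P\in\mathcal A}$ of positive integers, $|\tau|=\sum_P\tau_P$; the deck $\Omega$ has $|\tau|$ cards; a deal of type $\tau$ is a partition $H=(H_P)_P$ of $\Omega$ with $|H_P|=\tau_P$. Suitable parameters: $m>1$, $q>m$ a prime power, $d>0$, $|\tau|=q^{d+1}$, $\tau_A=q^{d+1}-q^d$, $\tau_{B_k}>q^{d-1}$ for each $k$. A transversal hyperplane $V\subseteq\mathbb F_q^{d+1}$ is $\{x: x_{d+1}=a_1x_1+\dots+a_dx_d+b\}$; $\sigma(V)=(a_1,\dots,a_d)$; $\pi$ projects onto the first $d$ coordinates, $\pi|_V$ is a bijection onto $\mathbb F_q^d$ with inverse $\iota_V$; $\pi^V_\downarrow(w)=\pi(w)+\sigma(V)$ for $w\in V$ and $\pi^V_\uparrow(y)=\iota_V(y-\sigma(V))$ for $y\in\mathbb F_q^d$. $N(V,\rho)$ is defined by $N(V,\rho)_A=f^{-1}[\mathbb F_q^{d+1}\setminus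 V]$ and $N(V,\rho)_{B_k}=f^{-1}[\pi^V_\uparrow[X_k]]$ for $k\in[1,m]$. Shifted projection protocol: maximal executions for deal $H$ are $(H,f,X_1,\dots,X_m)$ with $f:\Omega\to\mathbb F_q^{d+1}$ a bijection such that $V=\mathbb F_q^{d+1}\setminus f[H_A]$ is a transversal hyperplane and $X_k=\pi^V_\downarrow[f[H_{B_k}]]$; $\Pi(H,\rho)$ is the set of tokens $a$ with $(H,\rho*a)$ an initial segment of a maximal execution; an execution is $(H,a_0,\dots,a_n)$ with $a_k\in\Pi(H,a_0,\dots,a_{k-1})$ for all $k$. *)

(* Defs.v *)
From HB Require Import structures.
From mathcomp Require Import all_boot all_order all_algebra.
Set Implicit Arguments. Unset Strict Implicit. Unset Printing Implicit Defensive.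
Import GRing.Theory.
Local Open Scope ring_scope.

(* Agents: [None] is A, [Some k] (k : 'I_m) is B_{k+1}. *)
Definition agent (m : nat) := option 'I_m.

Definition tau_size (m : nat) (tau : agent m -> nat) : nat :=
  (\sum_(P : agent m) tau P)%N.

Definition is_prime_power (q : nat) : Prop := exists p k, prime p /\ q = (p ^ k)%N.

Definition suitable (m q d : nat) (tau : agent m -> nat) : Prop :=
  [/\ (1 < m)%N, (m < q)%N, is_prime_power q & (0 < d)%N] /\
  [/\ (forall P, 0 < tau P)%N,
      tau_size tau = (q ^ d.+1)%N,
      tau None = (q ^ d.+1 - q ^ d)%N
    & forall k : 'I_m, (q ^ d.-1 < tau (Some k))%N].
Arguments suitable : clear implicits.

Definition deal (Omega : finType) (m : nat) (tau : agent m -> nat)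
  (H : agent m -> {set Omega}) : Prop :=
  [/\ forall P, #|H P| = tau P,
      forall P Q, P != Q -> [disjoint H P & H Q]
    & \bigcup_P H P = [set: Omega]].

Definition is_partition (T : finType) (m : nat) (X : 'I_m -> {set T}) : Prop :=
  (forall i j, i != j -> [disjoint X i & X j]) /\ \bigcup_i X i = [set: T].

Definition proj (F : finFieldType) (d : nat) (x : 'rV[F]_d.+1) : 'rV[F]_d :=
  \row_(i < d) x 0 (widen_ord (leqnSn d) i).

(* the transversal hyperplane x_{d+1} = a_1 x_1 + ... + a_d x_d + b;
   sigma(hyp a b) = a *)
Definition hyp (F : finFieldType) (d : nat) (a : 'rV[F]_d) (b : F)
  : {set 'rV[F]_d.+1} :=
  [set x : 'rV[F]_d.+1 | x 0 ord_max == \sum_(i < d) a 0 i * x 0 (widen_ord (leqnSn d) i) + b].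

Definition transversal (F : finFieldType) (d : nat) (V : {set 'rV[F]_d.+1}) : Prop :=
  exists a b, V = hyp a b.

Definition proj_down (F : finFieldType) (d : nat) (a : 'rV[F]_d)
  (W : {set 'rV[F]_d.+1}) : {set 'rV[F]_d} :=
  [set proj w + a | w in W].

(* pi^V_up[Y] = { iota_V(y - sigma V) | y in Y } = { w in V | pi w + sigma V in Y } *)
Definition proj_up (F : finFieldType) (d : nat) (V : {set 'rV[F]_d.+1})
  (a : 'rV[F]_d) (Y : {set 'rV[F]_d}) : {set 'rV[F]_d.+1} :=
  [set w in V | proj w + a \in Y].

Definition N (Omega : finType) (F : finFieldType) (m d : nat)
  (a : 'rV[F]_d) (b : F) (f : {ffun Omega -> 'rV[F]_d.+1})
  (X : 'I_m -> {set 'rV[F]_d}) : agent m -> {set Omega} :=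
  fun P => match P with
           | None => f @^-1: (~: hyp a b)
           | Some k => f @^-1: proj_up (hyp a b) a (X k)
           end.

Inductive token (Omega : finType) (F : finFieldType) (d : nat) : Type :=
  | TokF of {ffun Omega -> 'rV[F]_d.+1}
  | TokX of {set 'rV[F]_d}.

Definition rho (Omega : finType) (F : finFieldType) (m d : nat)
  (f : {ffun Omega -> 'rV[F]_d.+1}) (X : 'I_m -> {set 'rV[F]_d})
  : seq (token Omega F d) :=
  @TokF Omega F d f :: [seq @TokX Omega F d (X k) | k <- enum 'I_m].

Definition maxexec (Omega : finType) (F : finFieldType) (m d : nat)
  (tau : agent m -> nat) (H : agent m -> {set Omega}) (s : seq (token Omega F d))
  : Prop :=
  deal tau H /\
  exists (f : {ffun Omega -> 'rV[F]_d.+1}) (X : 'I_m -> {set 'rV[F]_d}),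
    [/\ s = rho f X, bijective f &
        exists (a : 'rV[F]_d) (b : F),
          ~: (f @: H None) = hyp a b /\
          forall k, X k = proj_down a (f @: H (Some k))].

Definition Pi (Omega : finType) (F : finFieldType) (m d : nat)
  (tau : agent m -> nat) (H : agent m -> {set Omega}) (r : seq (token Omega F d))
  (t : token Omega F d) : Prop :=
  exists s', maxexec tau H (rcons r t ++ s').

Definition execution (Omega : finType) (F : finFieldType) (m d : nat)
  (tau : agent m -> nat) (H : agent m -> {set Omega}) (s : seq (token Omega F d))
  : Prop :=
  forall s1 t s2, s = s1 ++ t :: s2 -> Pi tau H s1 t.

(* Main.v *)
Require Import Defs.
From HB Require Import structures.
From mathcomp Require Import all_boot all_order all_algebra.
Import GRing.Theory.
Local Open Scope ring_scope.

Section Aux.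
Variables (F : finFieldType) (d : nat) (a : 'rV[F]_d) (b : F).

Definition liftv (y : 'rV[F]_d) : 'rV[F]_d.+1 :=
  \row_(i < d.+1) (match unlift ord_max i with Some j => y 0 j
                   | None => \sum_(j < d) a 0 j * y 0 j + b end).

Lemma proj_lift y : proj (liftv y) = y.
Proof.
apply/rowP => i; rewrite !mxE.
have -> : widen_ord (leqnSn d) i = lift ord_max i by apply/val_inj; rewrite /= /bump leqNgt ltn_ord.
by rewrite liftK.
Qed.

Lemma lift_in y : liftv y \in hyp a b.
Proof.
rewrite inE !mxE unlift_none; apply/eqP; congr (_ + _); apply: eq_bigr => j _.
by have := congr1 (fun r : 'rV[F]_d => r 0 j) (proj_lift y); rewrite /= mxE => ->.
Qed.

Lemma lift_proj w : w \in hyp a b -> liftv (proj w) = w.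
Proof.
rewrite inE => /eqP hw; apply/rowP => i; rewrite !mxE.
case: unliftP => [j ->|->].
  by rewrite mxE; congr (w 0 _); apply/val_inj; rewrite /= /bump leqNgt ltn_ord.
rewrite hw; congr (_ + _); apply: eq_bigr => j _; by rewrite mxE.
Qed.

Lemma liftv_inj : injective liftv.
Proof. by move=> x y e; rewrite -(proj_lift x) e proj_lift. Qed.

Lemma hypE : hyp a b = liftv @: [set: 'rV[F]_d].
Proof.
apply/setP => w; apply/idP/imsetP.
  by move=> hw; exists (proj w); rewrite ?inE // lift_proj.
by case=> y _ ->; apply: lift_in.
Qed.

Lemma card_hyp : #|hyp a b| = (#|F| ^ d)%N.
Proof. by rewrite hypE card_imset ?cardsT ?card_mx ?mul1n //; apply: liftv_inj. Qed.

Lemma proj_upE (Y : {set 'rV[F]_d}) :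
  proj_up (hyp a b) a Y = (fun y => liftv (y - a)) @: Y.
Proof.
apply/setP => w; rewrite inE; apply/andP/imsetP.
  by case=> hw hY; exists (proj w + a) => //; rewrite addrK lift_proj.
case=> y hy ->; rewrite lift_in proj_lift subrK; split=> //.
Qed.

Lemma card_proj_up (Y : {set 'rV[F]_d}) : #|proj_up (hyp a b) a Y| = #|Y|.
Proof.
rewrite proj_upE card_imset // => x y /liftv_inj /eqP; rewrite subr_eq subrK.
by move/eqP.
Qed.

Lemma proj_down_up (Y : {set 'rV[F]_d}) :
  proj_down a (proj_up (hyp a b) a Y) = Y.
Proof.
apply/setP => y; apply/imsetP/idP.
  by case=> w; rewrite inE => /andP[_ h] ->.
move=> hy; exists (liftv (y - a)); first by rewrite proj_upE; apply: imset_f.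
by rewrite proj_lift subrK.
Qed.
End Aux.

Theorem mainTheorem10 (m q d : nat) (F : finFieldType) (Omega : finType)
  (tau : agent m -> nat)
  (f : {ffun Omega -> 'rV[F]_d.+1}) (X : 'I_m -> {set 'rV[F]_d}) :
  suitable m q d tau ->
  #|F| = q ->
  #|Omega| = tau_size tau ->
  bijective f ->
  is_partition X ->
  (forall k : 'I_m, #|X k| = tau (Some k)) ->
  forall (a : 'rV[F]_d) (b : F),
    deal tau (N a b f X) /\ execution tau (N a b f X) (rho f X).
Proof.
move=> [_ [_ _ htauA _]] hF _ bij_f [Xdis Xcov] hX a b.
have cpre (S : {set 'rV[F]_d.+1}) : #|f @^-1: S| = #|S|.
  by apply: (@on_card_preimset _ _ f); exact: onW_bij.
have fpre (S : {set 'rV[F]_d.+1}) : f @: (f @^-1: S) = S.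
  apply/setP => x; apply/imsetP/idP; first by case=> y; rewrite inE => h ->.
  by case: bij_f => g h1 h2 hx; exists (g x); rewrite ?inE h2.
have Hdeal : deal tau (N a b f X).
  split.
  - case=> [k|] /=; first by rewrite cpre card_proj_up hX.
    by rewrite cpre cardsCs setCK card_hyp card_mx mul1n htauA -hF.
  - move=> P Q hPQ; rewrite -setI_eq0; apply/eqP/setP => x.
    rewrite in_set0 inE; apply/negP.
    case: P Q hPQ => [i|] [j|] //= hij.
    + rewrite !inE => /andP[/andP[_ h1] /andP[_ h2]].
      have hij' : i != j by apply: contra hij => /eqP ->.
      move: (Xdis _ _ hij'); rewrite -setI_eq0 => /eqP/setP/(_ (proj (f x) + a)).
      by rewrite !inE h1 h2.
    + by rewrite !inE => /andP[/andP[-> _]].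
    + by rewrite !inE => /andP[/negP h /andP[h' _]].
  - apply/setP => x; rewrite inE; apply/bigcupP.
    case hx: (f x \in hyp a b); last by exists None => //=; rewrite inE in_setC hx.
    have : proj (f x) + a \in \bigcup_i X i by rewrite Xcov inE.
    case/bigcupP => k _ hk; exists (Some k) => //=.
    by rewrite inE /proj_up inE hx hk.
split=> // s1 t s2 hs; exists s2; rewrite cat_rcons -hs.
split=> //; exists f, X; split=> //; exists a, b; split.
  by rewrite /= fpre setCK.
by move=> k; rewrite /= fpre proj_down_up.
Qed.
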